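(* Let $\gamma\in(0,1)$ and $\alpha_n=\gamma/(1+n\gamma)$ for $n\ge0$. Then for nonnegative integers $n,s$ and a positive integer $r$, \[ \mu_{n,r,s}=\begin{cases}\delta_{n+r,s}&\text{if } s\ge n+r,\\[2pt] -\dfrac{n\gamma^2}{(1+(r-1)\gamma)(1+s\gamma)}&\text{if } n-1<s<n+r,\\[2pt] \dfrac{(1-\gamma)\gamma}{(1+(r-1)\gamma)(1+s\gamma)}&\text{if } 0\le s\le n-1.\end{cases} \]
   Context: For a polynomial $f(z)=\sum_{k=0}^n a_kz^k$ of degree $n$, write $\overline{f}(z)=\sum_k\overline{a_k}z^k$ and $f^*(z)=z^n\overline{f}(1/z)$. Given $(\alpha_n)$ with $|\alpha_n|<1$, define monic $\Phi_n$ by $\Phi_0=1$, $\Phi_{n+1}(z)=z\Phi_n(z)-\overline{\alpha_n}\Phi_n^*(z)$. Let $\mathcal{L}$ be the unique linear functional on Laurent polynomials with $\mathcal{L}(1)=1$ and $\mathcal{L}(\Phi_m(z)\overline{\Phi_n}(1/z))=0$ for $m\neq n$; set $\langle f,g\rangle=\mathcal{L}(f(z)\overline{g}(1/z))$ and $\mu_{n,r,s}=\langle\Phi_s(z),z^n\Phi_r(z)\rangle/\langle\Phi_s,\Phi_s\rangle$. *)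

(* Defs.v *)
From mathcomp Require Import all_boot all_order all_algebra.
Set Implicit Arguments. Unset Strict Implicit. Unset Printing Implicit Defensive.
Import Order.TTheory GRing.Theory Num.Theory.
Local Open Scope ring_scope.

Section OPUC.
Variable C : numClosedFieldType.

(* f^*(z) = z^n \overline{f}(1/z), n = deg f: reverse and conjugate the
   coefficients. *)
Definition polystar (p : {poly C}) : {poly C} :=
  \poly_(i < size p) Num.conj (p`_((size p).-1 - i)).

Fixpoint Phi (alpha : nat -> C) (n : nat) : {poly C} :=
  match n with
  | 0 => 1
  | n'.+1 => 'X * Phi alpha n' - Num.conj (alpha n') *: polystar (Phi alpha n')
  end.

(* A linear functional L on Laurent polynomials is given by its moments
   c k = L(z^k), k : int.  Then
   <f,g> = L(f(z) \overline{g}(1/z)) = sum_{i,j} f_i conj(g_j) c(i-j). *)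
Definition ipL (c : int -> C) (f g : {poly C}) : C :=
  \sum_(i < size f) \sum_(j < size g)
     f`_i * Num.conj (g`_j) * c (i%:Z - j%:Z).

Definition is_OPUC_functional (alpha : nat -> C) (c : int -> C) : Prop :=
  c 0 = 1 /\ forall m n : nat, m <> n -> ipL c (Phi alpha m) (Phi alpha n) = 0.

Definition mu (alpha : nat -> C) (c : int -> C) (n r s : nat) : C :=
  ipL c (Phi alpha s) ('X^n * Phi alpha r) / ipL c (Phi alpha s) (Phi alpha s).

End OPUC.

(* Main.v *)
Require Import Defs.
From mathcomp Require Import all_boot all_order all_algebra.
From mathcomp Require Import zify ring.
Import Order.TTheory GRing.Theory Num.Theory.
Local Open Scope ring_scope.

Section Aux.
Variable C : numClosedFieldType.
Variable g : C.
Hypothesis hg0 : 0 < g.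
Hypothesis hg1 : g < 1.

Definition bb (k : nat) : C := g / (1 + (k%:R - 1) * g).
Definition Z_def (k : nat) : {poly C} :=
  \poly_(i < k.+1) ((i == k)%:R - bb k * (i < k)%:R).
Fact Z_key : unit. Proof. exact: tt. Qed.
Definition Z := locked_with Z_key Z_def.
Lemma Z_unlock k : Z k = Z_def k. Proof. by rewrite /Z unlock. Qed.

Lemma greal : g \is Num.real. Proof. exact: gtr0_real. Qed.

Lemma D_gt0 k : 0 < 1 + (k%:R - 1) * g.
Proof.
have -> : 1 + (k%:R - 1) * g = (1 - g) + k%:R * g by ring.
apply: ltr_wpDr; first by apply: mulr_ge0; [exact: ler0n | exact: ltW].
by rewrite subr_gt0.
Qed.

Lemma E_gt0 k : 0 < 1 + k%:R * g.
Proof.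
apply: ltr_wpDr; first by apply: mulr_ge0; [exact: ler0n | exact: ltW].
exact: ltr01.
Qed.

Lemma D_neq0 k : 1 + (k%:R - 1) * g != 0. Proof. exact: lt0r_neq0 (D_gt0 k). Qed.
Lemma E_neq0 k : 1 + k%:R * g != 0. Proof. exact: lt0r_neq0 (E_gt0 k). Qed.
Lemma G_neq0 : 1 - g != 0. Proof. by apply: lt0r_neq0; rewrite subr_gt0. Qed.

Lemma bb_real k : bb k \is Num.real.
Proof.
rewrite /bb.
apply: realM; first exact: greal.
rewrite realV; apply: realD; first exact: real1.
apply: realM; last exact: greal.
by apply: realB; [exact: realn | exact: real1].
Qed.

Lemma bb_conj k : Num.conj (bb k) = bb k.
Proof. exact: conj_Creal (bb_real k). Qed.

Lemma bbS k : bb k.+1 = g / (1 + k%:R * g).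
Proof. by rewrite /bb -natr1 addrK. Qed.

Lemma coef_Z k i : (Z k)`_i = (i == k)%:R - bb k * (i < k)%:R.
Proof.
rewrite Z_unlock coef_poly; case: ltnP => // h.
have -> : (i == k) = false by lia.
have -> : (i < k)%N = false by lia.
by rewrite mulr0 subr0.
Qed.

Lemma size_Z k : size (Z k) = k.+1.
Proof. by rewrite Z_unlock size_poly_eq //= eqxx ltnn mulr0 subr0 oner_neq0. Qed.

Lemma conj_coefZ k i : Num.conj ((Z k)`_i) = (Z k)`_i.
Proof.
apply: conj_Creal; rewrite coef_Z; apply: realB; first exact: realn.
by apply: realM; [exact: bb_real | exact: realn].
Qed.

Lemma polystar_Z k : polystar (Z k) = \poly_(i < k.+1) ((Z k)`_(k - i)).
Proof.
rewrite /polystar size_Z; apply/polyP => i; rewrite coef_poly [RHS]coef_poly.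
by case: ifP => // _; rewrite conj_coefZ.
Qed.

Lemma Phi_Z k : Phi (fun k : nat => g / (1 + k%:R * g)) k = Z k.
Proof.
elim: k => [|k IH].
  by apply/polyP => i; rewrite coef_Z coef1 ltn0 mulr0 subr0.
apply/polyP => i.
rewrite [Phi _ k.+1]/= IH coefB coefXM coefZ polystar_Z coef_poly.
rewrite -bbS bb_conj !coef_Z.
case: i => [|i] /=.
  by rewrite subn0 eqxx ltnn mulr0 subr0 mulr1.
rewrite !ltnS eqSS; case: (ltnP i k) => h.
  have -> : (k - i.+1 == k)%N = false by lia.
  have -> : (k - i.+1 < k)%N = true by lia.
  have -> : (i == k) = false by lia.
  rewrite bbS /bb /= !mulr1 !sub0r.
  have h1 := D_neq0 k; have h2 := E_neq0 k.
  by field; rewrite h1 h2.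
by rewrite /= !mulr0 !subr0.
Qed.

Lemma sum_widen (F : nat -> C) m N : (m <= N)%N -> (forall i, (m <= i)%N -> F i = 0) ->
  \sum_(i < m) F i = \sum_(i < N) F i.
Proof.
move=> hm hF; rewrite (big_ord_widen N F hm) big_mkcond; apply: eq_bigr => i _.
by case: ifP => // /negbT; rewrite -leqNgt => /hF ->.
Qed.

Lemma ipL_N (c : int -> C) (f h : {poly C}) N : (size f <= N)%N -> (size h <= N)%N ->
  ipL c f h = \sum_(i < N) \sum_(j < N) f`_i * Num.conj (h`_j) * c (i%:Z - j%:Z).
Proof.
move=> hf hh; rewrite /ipL (sum_widen (fun i => \sum_(j < size h) f`_i * Num.conj (h`_j) * c (i%:Z - j%:Z)) _ _ hf).
  apply: eq_bigr => i _; apply: (sum_widen (fun j => f`_i * Num.conj (h`_j) * c (i%:Z - j%:Z))) => // j hj.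
  by rewrite (nth_default 0 hj) rmorph0 mulr0 mul0r.
by move=> i hi; apply: big1 => j _; rewrite (nth_default 0 hi) !mul0r.
Qed.

Lemma ip_formula (c : int -> C) (f h : {poly C}) N :
  (forall k, c k = g + (1 - g) * (k == 0)%:R) ->
  (size f <= N)%N -> (size h <= N)%N ->
  ipL c f h = g * (\sum_(i < N) f`_i) * (\sum_(j < N) Num.conj (h`_j))
              + (1 - g) * \sum_(i < N) f`_i * Num.conj (h`_i).
Proof.
move=> hc hf hh; rewrite (ipL_N c f h N hf hh).
transitivity (\sum_(i < N) (\sum_(j < N) g * (f`_i * Num.conj (h`_j))
   + \sum_(j < N) (1 - g) * (f`_i * Num.conj (h`_j)) * ((i : nat) == j)%:R)).
  apply: eq_bigr => i _; rewrite -big_split; apply: eq_bigr => j _ /=.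
  rewrite hc subr_eq0 eqz_nat; ring.
rewrite big_split /=; congr (_ + _).
  rewrite -mulrA mulr_suml mulr_sumr; apply: eq_bigr => i _.
  by rewrite mulr_sumr mulr_sumr; apply: eq_bigr => j _; ring.
rewrite mulr_sumr; apply: eq_bigr => i _.
rewrite (bigD1 i) //= eqxx mulr1 big1 ?addr0 // => j hij.
rewrite (_ : ((i : nat) == j) = false) ?mulr0 //.
by apply/negbTE; move: hij; apply: contra => /eqP hh0; apply/eqP/val_inj.
Qed.

Lemma sum_eq1 N s (F : nat -> C) : (s < N)%N ->
  \sum_(i < N) ((i : nat) == s)%:R * F i = F s.
Proof.
move=> hs; rewrite (bigD1 (Ordinal hs)) //= eqxx mul1r big1 ?addr0 // => i hi.
rewrite (_ : ((i : nat) == s) = false) ?mul0r //.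
by apply/negbTE; move: hi; apply: contra => /eqP hh0; apply/eqP/val_inj.
Qed.

Lemma sum_int (N n m : nat) : (m <= N)%N ->
  \sum_(i < N) ((n <= i)%N && (i < m)%N)%:R = (m - n)%N%:R :> C.
Proof.
elim: m => [|m IH] hm.
  by rewrite sub0n; apply: big1 => i _; rewrite ltn0 andbF.
transitivity (\sum_(i < N) (((n <= i)%N && (i < m)%N)%:R + ((i : nat) == m)%:R * (n <= m)%N%:R : C)).
  apply: eq_bigr => i _; rewrite -natrM -natrD; congr (_%:R); lia.
rewrite big_split /= IH ?(ltnW hm) // (@sum_eq1 N m (fun _ => (n <= m)%N%:R) hm) -natrD; congr (_%:R); lia.
Qed.


Lemma mom (e : nat -> C) : e 0%N = 1 ->
  (forall m, (0 < m)%N -> \sum_(i < m.+1) (Z m)`_i * e i = 0) ->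
  forall k, (0 < k)%N -> e k = g.
Proof.
move=> e0 he.
suff H : forall m k, (0 < k)%N -> (k <= m)%N -> e k = g.
  by move=> k hk; apply: (H k).
elim=> [|m IH] k hk hkm; first by case: k hk hkm.
rewrite leq_eqVlt in hkm; case/orP: hkm => [/eqP -> | hkm]; last by apply: IH; rewrite // -ltnS.
have := he m.+1 isT; rewrite big_ord_recr /= coef_Z eqxx ltnn mulr0 subr0 mul1r.
rewrite (eq_bigr (fun i : 'I_m.+1 => - bb m.+1 * e i)); last first.
  move=> i _; have hi := ltn_ord i.
  rewrite coef_Z hi.
  have -> : ((i : nat) == m.+1) = false by lia.
  by rewrite /= sub0r mulr1 mulNr.
rewrite -mulr_sumr big_ord_recl e0.
rewrite (eq_bigr (fun _ => g)); last first.
  by move=> i _; apply: IH => //=; exact: ltn_ord.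
rewrite sumr_const card_ord => H.
have -> : e m.+1 = (- bb m.+1 * (1 + g *+ m) + e m.+1) + bb m.+1 * (1 + g *+ m) by ring.
rewrite H bbS -mulr_natr add0r.
have h1 := E_neq0 m.
by field; rewrite h1.
Qed.

Lemma c_val c : is_OPUC_functional (fun k : nat => g / (1 + k%:R * g)) c ->
  forall k, c k = g + (1 - g) * (k == 0)%:R.
Proof.
case=> c0 horth.
have hpos : forall k, (0 < k)%N -> c k%:Z = g.
  apply: (mom (fun i => c i%:Z)) => // m hm.
  rewrite -[RHS](horth m 0%N); last by move=> h0; rewrite h0 in hm.
  rewrite /ipL !Phi_Z !size_Z; apply: eq_bigr => i _.
  by rewrite big_ord1 /= conj_coefZ (coef_Z 0 0) eqxx ltnn mulr0 subr0 mulr1 subr0.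
have hneg : forall k, (0 < k)%N -> c (- k%:Z) = g.
  apply: (mom (fun i => c (- i%:Z))) => [|m hm]; first by rewrite oppr0.
  rewrite -[RHS](horth 0%N m); last by move=> h0; rewrite -h0 in hm.
  rewrite /ipL !Phi_Z !size_Z big_ord1; apply: eq_bigr => j _.
  by rewrite /= conj_coefZ (coef_Z 0 0) eqxx ltnn mulr0 subr0 mul1r sub0r.
case=> k.
  case: k => [|k]; first by rewrite c0 eqxx mulr1 addrC subrK.
  by rewrite hpos // mulr0 addr0.
rewrite NegzE hneg //.
have -> : (- (k.+1)%:Z == 0) = false by rewrite oppr_eq0.
by rewrite mulr0 addr0.
Qed.

Lemma coef_XZ n r i : ('X^n * Z r)`_i =
  (i == n + r)%:R - bb r * ((n <= i)%N && (i < n + r)%N)%:R.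
Proof.
rewrite coefXnM coef_Z; case: ifP => hi.
  have -> : (i == n + r) = false by lia.
  have -> : ((n <= i)%N && (i < n + r)%N) = false by lia.
  by rewrite /= mulr0 subr0.
have -> : (i - n == r)%N = (i == n + r)%N by lia.
have -> : (i - n < r)%N = ((n <= i)%N && (i < n + r)%N) by lia.
by [].
Qed.

Lemma conj_XZ n r i : Num.conj (('X^n * Z r)`_i) = ('X^n * Z r)`_i.
Proof.
apply: conj_Creal; rewrite coef_XZ; apply: realB; first exact: realn.
by apply: realM; [exact: bb_real | exact: realn].
Qed.


Lemma num (c : int -> C) (hc : forall k, c k = g + (1 - g) * (k == 0)%:R) n r s :
  ipL c (Z s) ('X^n * Z r) =
  g * (1 - bb s * s%:R) * (1 - bb r * r%:R)
  + (1 - g) * ((s == n + r)%:R - bb r * ((n <= s)%N && (s < n + r)%N)%:R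
               - bb s * ((n + r < s)%N%:R - bb r * (minn s (n + r) - n)%N%:R)).
Proof.
pose N := (s + n + r).+1.
rewrite (@ip_formula c (Z s) ('X^n * Z r) N hc); first last.
- apply: leq_trans (size_polyMleq _ _) _; rewrite size_polyXn size_Z /N; lia.
- rewrite size_Z /N; lia.
have hsN : (s < N)%N by rewrite /N; lia.
have S1 : \sum_(i < N) (Z s)`_i = 1 - bb s * s%:R.
  rewrite (eq_bigr (fun i : 'I_N => ((i : nat) == s)%:R * 1 - bb s * ((0 <= i)%N && (i < s)%N)%:R)); last first.
    by move=> i _; rewrite coef_Z mulr1.
  rewrite sumrB (@sum_eq1 N s (fun _ => 1) hsN) -mulr_sumr sum_int ?subn0 //; lia.
have S2 : \sum_(j < N) Num.conj (('X^n * Z r)`_j) = 1 - bb r * r%:R.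
  rewrite (eq_bigr (fun i : 'I_N => ((i : nat) == n + r)%:R * 1 - bb r * ((n <= i)%N && (i < n + r)%N)%:R)); last first.
    by move=> i _; rewrite conj_XZ coef_XZ mulr1.
  rewrite sumrB (@sum_eq1 N (n + r) (fun _ => 1)); last by rewrite /N; lia.
  rewrite -mulr_sumr sum_int ?addKn //; rewrite /N; lia.
have S3 : \sum_(i < N) (Z s)`_i * Num.conj (('X^n * Z r)`_i) =
   (s == n + r)%:R - bb r * ((n <= s)%N && (s < n + r)%N)%:R
   - bb s * ((n + r < s)%N%:R - bb r * (minn s (n + r) - n)%N%:R).
  rewrite (eq_bigr (fun i : 'I_N => ((i : nat) == s)%:R * (('X^n * Z r)`_i)
     - bb s * (((i : nat) == n + r)%:R * (i < s)%N%:R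
     - bb r * ((n <= i)%N && (i < minn s (n + r))%N)%:R))); last first.
    move=> i _; rewrite conj_XZ coef_Z coef_XZ.
    have e : ((i < s)%N%:R * ((n <= i)%N && (i < n + r)%N)%:R : C)
       = ((n <= i)%N && (i < minn s (n + r))%N)%:R.
      by rewrite -natrM; congr (_%:R); lia.
    rewrite -e; ring.
  rewrite sumrB (@sum_eq1 N s (fun i => ('X^n * Z r)`_i) hsN) -mulr_sumr sumrB.
  rewrite (@sum_eq1 N (n + r) (fun i => (i < s)%N%:R)); last by rewrite /N; lia.
  rewrite -mulr_sumr sum_int; last by rewrite /N; lia.
  by rewrite coef_XZ.
by rewrite S1 S2 S3.
Qed.

End Aux.

Theorem proposition4p6 (C : numClosedFieldType) (gamma : C)
  (hg0 : 0 < gamma) (hg1 : gamma < 1) (c : int -> C)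
  (hL : is_OPUC_functional (fun k : nat => gamma / (1 + k%:R * gamma)) c)
  (n r s : nat) (hr : (0 < r)%N) :
  let mu_nrs := mu (fun k : nat => gamma / (1 + k%:R * gamma)) c n r s in
  [/\ ((n + r <= s)%N -> mu_nrs = (s == n + r)%:R),
      ((n <= s < n + r)%N ->
         mu_nrs = - (n%:R * gamma ^+ 2)
                  / ((1 + (r%:R - 1) * gamma) * (1 + s%:R * gamma)))
    & ((s < n)%N ->
         mu_nrs = (1 - gamma) * gamma
                  / ((1 + (r%:R - 1) * gamma) * (1 + s%:R * gamma)))].
Proof.
move=> mu_nrs; rewrite /mu_nrs /mu !(@Phi_Z _ _ hg0 hg1).
have hc := @c_val _ _ hg0 hg1 c hL.
have Hnorm := @num _ _ hg0 hg1 c hc 0 s s.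
rewrite expr0 mul1r add0n eqxx ltnn andbF minnn subn0 in Hnorm.
have hDs := @D_neq0 _ _ hg0 hg1 s.
have hDr := @D_neq0 _ _ hg0 hg1 r.
have hEs := @E_neq0 _ _ hg0 s.
have hG := @G_neq0 _ _ hg1.
have normE : ipL c (Z C gamma s) (Z C gamma s) =
    (1 - gamma) * (1 + s%:R * gamma) / (1 + (s%:R - 1) * gamma).
  rewrite Hnorm /bb /=; field; by rewrite ?hDs.
rewrite (@num _ _ hg0 hg1 c hc n r s) normE /bb.
split => h.
- rewrite leq_eqVlt in h; case/orP: h => [/eqP hs | hs].
    rewrite -hs eqxx ltnn andbF minnn addKn /=.
    rewrite -hs natrD in hDs hEs *.
    field; rewrite ?hDs ?hDr ?hEs ?hG ?mulf_neq0 ?invr_neq0 //.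
  have -> : (s == n + r) = false by lia.
  have -> : ((n <= s)%N && (s < n + r)%N) = false by lia.
  have -> : minn s (n + r) = (n + r)%N by lia.
  rewrite hs addKn /=.
  field; rewrite ?hDs ?hDr ?hEs ?hG ?mulf_neq0 ?invr_neq0 //.
- have -> : (s == n + r) = false by lia.
  have -> : ((n <= s)%N && (s < n + r)%N) = true by lia.
  have -> : (n + r < s)%N = false by lia.
  have -> : minn s (n + r) = s by lia.
  rewrite natrB; last by case/andP: h.
  rewrite /=.
  field; rewrite ?hDs ?hDr ?hEs ?hG ?mulf_neq0 ?invr_neq0 //.
- have -> : (s == n + r) = false by lia.
  have -> : ((n <= s)%N && (s < n + r)%N) = false by lia.
  have -> : (n + r < s)%N = false by lia.
  have -> : (minn s (n + r) - n)%N = 0%N by lia.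
  rewrite /=.
  field; rewrite ?hDs ?hDr ?hEs ?hG ?mulf_neq0 ?invr_neq0 //.
Qed.
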